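(* Let $p,q,e$ be positive integers and $n>1$ an integer. If $(x,y)\in\mathbb{Z}_{2^e}^2$ lies on a cycle of length $n$ of the Cat map over $\mathbb{Z}_{2^e}$, then $$(G_n-2)\,x\equiv 0\pmod{2^e}\quad\text{and}\quad (G_n-2)\,y\equiv 0\pmod{2^e}.$$
   Context: $\mathbf{C}=\begin{bmatrix}1 & p\\ q & 1+pq\end{bmatrix}$; the Cat map over $\mathbb{Z}_{2^e}$ is the bijection $v\mapsto\mathbf{C}v\bmod 2^e$ of $\mathbb{Z}_{2^e}^2$; a point lies on a cycle of length $n$ if $n$ is the least positive integer with $\mathbf{C}^nv\equiv v\pmod{2^e}$. $A=pq+2$, $B=\sqrt{A^2-4}$, $G_n=\left(\frac{A+B}{2}\right)^n+\left(\frac{A-B}{2}\right)^n$ (an integer). *)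

(* Defs.v *)
From mathcomp Require Import all_boot all_order all_algebra.
Set Implicit Arguments. Unset Strict Implicit. Unset Printing Implicit Defensive.
Import Order.TTheory GRing.Theory Num.Theory.
Local Open Scope ring_scope.

(* Cat map C = [[1, p], [q, 1 + p q]] acting on integer column vectors (x, y). *)
Definition cat_step (p q : int) (v : int * int) : int * int :=
  (v.1 + p * v.2, q * v.1 + (1 + p * q) * v.2).

Definition cat_iter (p q : int) (n : nat) (v : int * int) : int * int :=
  iter n (cat_step p q) v.

Definition vcong (m : int) (u v : int * int) : Prop :=
  (u.1 = v.1 %[mod m])%Z /\ (u.2 = v.2 %[mod m])%Z.

Definition on_cycle_of_length (p q : int) (e n : nat) (v : int * int) : Prop :=
  (0 < n)%N /\ vcong (2 ^+ e) (cat_iter p q n v) v /\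
  (forall k : nat, (0 < k < n)%N -> ~ vcong (2 ^+ e) (cat_iter p q k v) v).

(* G_n = ((A+B)/2)^n + ((A-B)/2)^n with A = pq + 2, B = sqrt(A^2 - 4).
   Since (A±B)/2 are the roots of t^2 - A t + 1, G_n is the integer sequence
   G_0 = 2, G_1 = A, G_(k+2) = A G_(k+1) - G_k. *)
Fixpoint Gpair (A : int) (n : nat) : int * int :=
  match n with
  | 0%N => (2, A)
  | k.+1 => let g := Gpair A k in (g.2, A * g.2 - g.1)
  end.

Definition G (p q : int) (n : nat) : int := (Gpair (p * q + 2) n).1.

(* Main.v *)
Require Import Defs.
From mathcomp Require Import all_boot all_order all_algebra.
From mathcomp Require Import ring.
Import Order.TTheory GRing.Theory Num.Theory.
Local Open Scope ring_scope.

Fixpoint mat (p q : int) (n : nat) : int * int * int * int :=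
  match n with
  | 0%N => (1, 0, 0, 1)
  | k.+1 => let: (a, b, c, d) := mat p q k in
      (a + p * c, b + p * d, q * a + (1 + p * q) * c, q * b + (1 + p * q) * d)
  end.

Lemma mat_iter p q n x y : let: (a, b, c, d) := mat p q n in
  cat_iter p q n (x, y) = (a * x + b * y, c * x + d * y).
Proof.
elim: n => [|n IH] /=; first by rewrite /cat_iter /=; congr pair; ring.
move: IH; case: (mat p q n) => [[[a b] c] d] IH.
rewrite IH /cat_step /=.
congr pair; ring.
Qed.

Lemma mat_det p q n : let: (a, b, c, d) := mat p q n in a * d - b * c = 1.
Proof.
elim: n => [|n IH] /=; first by ring.
move: IH; case: (mat p q n) => [[[a b] c] d] IH.
transitivity (a * d - b * c); last exact: IH.
ring.
Qed.

Definition tr p q n := let: (a, b, c, d) := mat p q n in a + d.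

Lemma tr_rec p q n : tr p q n.+2 = (p * q + 2) * tr p q n.+1 - tr p q n.
Proof.
rewrite /tr /=; case: (mat p q n) => [[[a b] c] d]; ring.
Qed.

Lemma Gpair_tr p q n : Gpair (p * q + 2) n = (tr p q n, tr p q n.+1).
Proof.
elim: n => [|n IH] /=.
  by rewrite /tr /=; congr pair; ring.
by rewrite IH /= tr_rec.
Qed.

Theorem lemma7 (p q : int) (e n : nat) (x y : int) :
  0 < p -> 0 < q -> (0 < e)%N -> (1 < n)%N ->
  on_cycle_of_length p q e n (x, y) ->
  ((G p q n - 2) * x = 0 %[mod 2 ^+ e])%Z /\
  ((G p q n - 2) * y = 0 %[mod 2 ^+ e])%Z.
Proof.
move=> _ _ _ _ [_ [[H1 H2] _]].
have := mat_iter p q n x y; have := mat_det p q n.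
have -> : G p q n = tr p q n by rewrite /G Gpair_tr.
rewrite /tr; case: (mat p q n) => [[[a b] c] d] Hdet Hit.
move: H1 H2; rewrite Hit /= => H1 H2.
move/eqP: H1; rewrite eqz_mod_dvd => H1.
move/eqP: H2; rewrite eqz_mod_dvd => H2.
split; apply/eqP; rewrite eqz_mod_dvd subr0.
- have -> : (a + d - 2) * x = (1 - d) * (a * x + b * y - x) + b * (c * x + d * y - y)
     + (a * d - b * c - 1) * x by ring.
  rewrite Hdet subrr mul0r addr0.
  by apply: rpredD; apply: dvdz_mull.
- have -> : (a + d - 2) * y = (1 - a) * (c * x + d * y - y) + c * (a * x + b * y - x)
     + (a * d - b * c - 1) * y by ring.
  rewrite Hdet subrr mul0r addr0.
  by apply: rpredD; apply: dvdz_mull.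
Qed.
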